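(* Let $G$ be a labeled complete graph (every edge labeled $+$ or $-$), let $\alpha,\gamma$ be real parameters with $0<\gamma<\alpha<1/2$, and let $x$ be any fractional clustering of $G$. Let $\mathcal{C}$ be the clustering produced by the following algorithm (Algorithm 1), where ties in the choice of pivot are broken arbitrarily: Set $S=V(G)$. While $S\neq\emptyset$: for each $u\in S$ let $T_u=\{w\in S\setminus\{u\} : x_{uw}\le\alpha\}$ and $T^*_u=\{w\in S\setminus\{u\} : x_{uw}\le\gamma\}$; choose a pivot $u\in S$ maximizing $|T^*_u|$ and let $T=T_u$; if $\sum_{w\in T}x_{uw}\ge \alpha|T|/2$, output the cluster $\{u\}$ and set $S=S\setminus\{u\}$; otherwise output the cluster $\{u\}\cup T$ and set $S=S\setminus(\{u\}\cup T)$. Then there is a constant $c$ depending only on $\alpha$ and $\gamma$ such that $\mathrm{err}(\mathcal{C})_v\le c\,\mathrm{err}(x)_v$ for all $v\in V(G)$.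
   Context: A (discrete) clustering of $G$ is a partition of $V(G)$. A fractional clustering of $G$ is a vector $x$ indexed by the unordered pairs of distinct vertices of $G$ with $x_{uv}\in[0,1]$ for all pairs and $x_{vz}\le x_{vw}+x_{wz}$ for all distinct $v,w,z$; by convention $x_{uu}=0$. For vertex $v$, $N^+(v)$ and $N^-(v)$ denote the sets of vertices joined to $v$ by a $+$ edge, resp. a $-$ edge. The error vector of a fractional clustering $x$ is the vector indexed by $V(G)$ with $\mathrm{err}(x)_v=\sum_{w\in N^+(v)}x_{vw}+\sum_{w\in N^-(v)}(1-x_{vw})$. For a clustering $\mathcal{C}$, $x^{\mathcal{C}}$ is the fractional clustering with $x^{\mathcal{C}}_{uv}=0$ if $u,v$ lie in the same cluster and $1$ otherwise, and $\mathrm{err}(\mathcal{C})=\mathrm{err}(x^{\mathcal{C}})$ (so $\mathrm{err}(\mathcal{C})_v$ is the number of $+$ edges at $v$ going between clusters plus the number of $-$ edges at $v$ inside $v$'s cluster). *)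

(* Defs.v *)
From HB Require Import structures.
From mathcomp Require Import all_boot all_order all_algebra.
From mathcomp Require Import reals.
Set Implicit Arguments. Unset Strict Implicit. Unset Printing Implicit Defensive.
Import Order.TTheory GRing.Theory Num.Theory.
Local Open Scope ring_scope.

(* A labeled complete graph on the finite vertex type V is given by a
   symmetric relation [plus]: for distinct u, v the edge uv is labeled +
   iff [plus u v], and - otherwise. *)
Definition labeled_complete (V : finType) (plus : rel V) : Prop :=
  forall u v : V, plus u v = plus v u.

Definition Nplus (V : finType) (plus : rel V) (v : V) : {set V} :=
  [set w | (w != v) && plus v w].
Definition Nminus (V : finType) (plus : rel V) (v : V) : {set V} :=
  [set w | (w != v) && ~~ plus v w].

Definition frac_clustering (R : realType) (V : finType) (x : V -> V -> R) : Prop :=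
  [/\ forall u v, u != v -> x u v = x v u,
      forall u v, u != v -> 0 <= x u v <= 1
    & forall v w z, v != w -> w != z -> v != z -> x v z <= x v w + x w z].

Definition err_frac (R : realType) (V : finType) (plus : rel V)
    (x : V -> V -> R) (v : V) : R :=
  \sum_(w in Nplus plus v) x v w + \sum_(w in Nminus plus v) (1 - x v w).

Definition same_cluster (V : finType) (P : seq {set V}) (v w : V) : bool :=
  has (fun B : {set V} => (v \in B) && (w \in B)) P.

Definition x_of_clustering (R : realType) (V : finType) (P : seq {set V})
    (u v : V) : R := if same_cluster P u v then 0 else 1.

Definition err_clust (R : realType) (V : finType) (plus : rel V)
    (P : seq {set V}) (v : V) : R :=
  err_frac plus (x_of_clustering R P) v.

Definition Tset (R : realType) (V : finType) (x : V -> V -> R) (a : R)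
    (S : {set V}) (u : V) : {set V} :=
  [set w in S | (w != u) && (x u w <= a)].

(* [alg1_run x alpha gamma S P]: P (list of output clusters, in order) is a
   possible output of Algorithm 1 started with current set S, for some
   choice of pivots (ties broken arbitrarily). *)
Inductive alg1_run (R : realType) (V : finType) (x : V -> V -> R) (alpha gamma : R)
  : {set V} -> seq {set V} -> Prop :=
| alg1_done : alg1_run x alpha gamma set0 [::]
| alg1_single : forall (S : {set V}) (u : V) (P : seq {set V}),
    u \in S ->
    (forall u', u' \in S -> #|Tset x gamma S u'| <= #|Tset x gamma S u|)%N ->
    \sum_(w in Tset x alpha S u) x u w >= alpha * #|Tset x alpha S u|%:R / 2 ->
    alg1_run x alpha gamma (S :\ u) P ->
    alg1_run x alpha gamma S ([set u] :: P)
| alg1_cluster : forall (S : {set V}) (u : V) (P : seq {set V}),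
    u \in S ->
    (forall u', u' \in S -> #|Tset x gamma S u'| <= #|Tset x gamma S u|)%N ->
    \sum_(w in Tset x alpha S u) x u w < alpha * #|Tset x alpha S u|%:R / 2 ->
    alg1_run x alpha gamma (S :\: (u |: Tset x alpha S u)) P ->
    alg1_run x alpha gamma S ((u |: Tset x alpha S u) :: P).

(* Main.v *)
Require Import Defs.
From HB Require Import structures.
From mathcomp Require Import all_boot all_order all_algebra.
From mathcomp Require Import reals.
From mathcomp Require Import ring lra.
Import Order.TTheory GRing.Theory Num.Theory.
Local Open Scope ring_scope.
Set Implicit Arguments. Unset Strict Implicit. Unset Printing Implicit Defensive.

Definition Qc (R : realType) (a g : R) : R :=
  a^-1 + g^-1 + (1 - 2*a)^-1 + (a - (a+g)/2)^-1 + ((a+g)/2 - g)^-1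
  + (1/2 - a)^-1 + (a/4)^-1.
Definition Kc (R : realType) (a g : R) : R := 2 * Qc a g * Qc a g + 2 * Qc a g.

Section Proof.
Variables (R : realType) (a g : R).
Hypotheses (g0 : 0 < g) (ga : g < a) (a2 : a < 1/2).

Ltac slra := move: (g0) (ga) (a2) => ? ? ?; lra.
Ltac snra := move: (g0) (ga) (a2) => ? ? ?; nra.
Let Q := Qc a g.
Let K := Kc a g.
Let b := (a + g) / 2.
Let eps := a / 4.

Lemma a0 : 0 < a. Proof. exact: lt_trans g0 ga. Qed.

Lemma Q_ge (c : R) : 0 < c ->
  c = a \/ c = g \/ c = 1 - 2*a \/ c = a - b \/ c = b - g \/ c = 1/2 - a \/ c = eps ->
  c^-1 <= Q.
Proof.
have h1 : 0 < a^-1 by rewrite invr_gt0; slra.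
have h2 : 0 < g^-1 by rewrite invr_gt0; slra.
have h3 : 0 < (1 - 2*a)^-1 by rewrite invr_gt0; slra.
have h4 : 0 < (a - (a+g)/2)^-1 by rewrite invr_gt0; slra.
have h5 : 0 < ((a+g)/2 - g)^-1 by rewrite invr_gt0; slra.
have h6 : 0 < (1/2 - a)^-1 by rewrite invr_gt0; slra.
have h7 : 0 < (a/4)^-1 by rewrite invr_gt0; slra.
move=> c0 hc.
rewrite /Q /Qc; rewrite /b /eps in hc.
case: hc => [->|[->|[->|[->|[->|[->|->]]]]]]; slra.
Qed.

Lemma Q0 : 0 <= Q.
Proof. have := @Q_ge a a0 (or_introl erefl). have : 0 < a^-1 by rewrite invr_gt0 a0. slra. Qed.

Lemma oneQ (c t : R) : 0 < c ->
  c = a \/ c = g \/ c = 1 - 2*a \/ c = a - b \/ c = b - g \/ c = 1/2 - a \/ c = eps ->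
  c <= t -> 1 <= Q * t.
Proof.
move=> c0 hc ct.
have hq := Q_ge c0 hc.
have t0 : 0 <= t by slra.
have h1 : 1 <= t / c by rewrite ler_pdivlMr // mul1r.
apply: (le_trans h1); rewrite mulrC; exact: ler_wpM2r.
Qed.

Lemma QK (t : R) : 0 <= t -> 2 * Q * t <= K * t.
Proof. move=> t0; apply: ler_wpM2r => //; rewrite /K /Kc -/Q; have := Q0; snra. Qed.

Lemma QQK (t : R) : 0 <= t -> 2 * Q * Q * t <= K * t.
Proof. move=> t0; apply: ler_wpM2r => //; rewrite /K /Kc -/Q; have := Q0; snra. Qed.


Lemma divQ (c s t : R) : 0 < c ->
  c = a \/ c = g \/ c = 1 - 2*a \/ c = a - b \/ c = b - g \/ c = 1/2 - a \/ c = eps ->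
  0 <= t -> c * s <= t -> s <= Q * t.
Proof.
move=> c0 hc t0 ct.
have hq := Q_ge c0 hc.
have h1 : s <= t / c by rewrite ler_pdivlMr // mulrC.
apply: (le_trans h1); rewrite mulrC; exact: ler_wpM2r.
Qed.

Lemma QK1 (t : R) : 0 <= t -> Q * t <= K * t.
Proof. move=> t0; apply: ler_wpM2r => //; rewrite /K /Kc -/Q; have := Q0; snra. Qed.

Lemma aQ : a^-1 <= Q.
Proof. apply: Q_ge; [exact: a0| by left]. Qed.

Lemma ainv0 : 0 < a^-1. Proof. by rewrite invr_gt0 a0. Qed.

Lemma aa : a^-1 * a = 1. Proof. by rewrite mulVf // gt_eqF // a0. Qed.

Variables (V : finType) (plus : rel V) (x : V -> V -> R).
Hypothesis hx : frac_clustering x.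
Variable v : V.

Definition cost (y : V -> V -> R) (w : V) : R :=
  if plus v w then y v w else 1 - y v w.
Definition Fs (y : V -> V -> R) (S : {set V}) : R := \sum_(w in S :\ v) cost y w.

Lemma xsym u w : u != w -> x u w = x w u.
Proof. by case: hx => h _ _; apply: h. Qed.
Lemma x01 u w : u != w -> 0 <= x u w <= 1.
Proof. by case: hx => _ h _; apply: h. Qed.
Lemma xtri u w z : u != w -> w != z -> u != z -> x u z <= x u w + x w z.
Proof. by case: hx => _ _ h; apply: h. Qed.
Lemma x0 u w : u != w -> 0 <= x u w.
Proof. by move/x01/andP=> []. Qed.
Lemma x1 u w : u != w -> x u w <= 1.
Proof. by move/x01/andP=> []. Qed.

Lemma cost_ge0 w : w != v -> 0 <= cost x w.
Proof.
move=> wv; have vw : v != w by rewrite eq_sym.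
rewrite /cost; case: (plus v w); first exact: x0.
by rewrite subr_ge0 x1.
Qed.

Lemma F_ge0 S : 0 <= Fs x S.
Proof. rewrite /Fs; apply: sumr_ge0 => w; rewrite !inE => /andP[wv _]; exact: cost_ge0. Qed.

Lemma sum_ind (A B : {set V}) (f : V -> R) : A \subset B ->
  \sum_(w in B) (if w \in A then f w else 0) = \sum_(w in A) f w.
Proof.
move=> AB; rewrite -big_mkcondr; apply: eq_bigl => w /=.
by case wA: (w \in A); rewrite ?andbT ?andbF //; apply: (subsetP AB).
Qed.

Lemma sum_sub (A B : {set V}) (f : V -> R) : A \subset B ->
  (forall w, w \in B -> 0 <= f w) -> \sum_(w in A) f w <= \sum_(w in B) f w.
Proof.
move=> AB f0; rewrite -(sum_ind f AB); apply: ler_sum => w wB.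
by case: ifP => _; [exact: lexx | exact: f0].
Qed.

Lemma err_frac_eq y : err_frac plus y v = Fs y [set: V].
Proof.
rewrite /err_frac /Fs [X in _ = X](big_setID (Nplus plus v)) /=.
have -> : ([set: V] :\ v) :&: Nplus plus v = Nplus plus v.
  by apply/setP => w; rewrite !inE; case: (w != v).
have -> : ([set: V] :\ v) :\: Nplus plus v = Nminus plus v.
  by apply/setP => w; rewrite !inE; case: (w != v); case: (plus v w).
congr (_ + _); apply: eq_bigr => w; rewrite inE /cost.
  by case/andP=> _ ->.
by case/andP=> _ /negbTE ->.
Qed.

Lemma blocks_sub S P : alg1_run x a g S P -> forall B, B \in P -> B \subset S.
Proof.
elim => {S P} [|S u P uS _ _ _ IH|S u P uS _ _ _ IH] B.
- by rewrite in_nil.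
- rewrite inE; case/orP => [/eqP->|/IH h]; first by rewrite sub1set.
  exact: subset_trans h (subsetDl _ _).
- rewrite inE; case/orP => [/eqP->|/IH h]; last exact: subset_trans h (subsetDl _ _).
  rewrite subUset sub1set uS /=; apply/subsetP => w; rewrite inE.
  by case/andP.
Qed.

Lemma same_out S P w z : alg1_run x a g S P -> (w \notin S) || (z \notin S) ->
  same_cluster P w z = false.
Proof.
move=> run h; apply/hasP => [[B BP /andP[wB zB]]]; have sB := blocks_sub run BP.
by move: h; rewrite (subsetP sB _ wB) (subsetP sB _ zB).
Qed.

Lemma same_cons (C : {set V}) (P : seq {set V}) (w z : V) :
  same_cluster (C :: P) w z = ((w \in C) && (z \in C)) || same_cluster P w z.
Proof. by []. Qed.

Lemma Fs_split y (S C : {set V}) : C \subset S -> v \notin C ->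
  Fs y S = \sum_(w in C) cost y w + Fs y (S :\: C).
Proof.
move=> CS vC; rewrite /Fs (big_setID C); congr (_ + _).
  apply: eq_bigl => w /=; rewrite !inE.
  case wC: (w \in C); rewrite ?andbT ?andbF //.
  apply/andP; split; last exact: (subsetP CS).
  by apply/eqP => wv; move: vC; rewrite -wv wC.
by apply: eq_bigl => w /=; rewrite !inE; case: (w \in C); case: (w != v).
Qed.

Lemma Ec_in (S C : {set V}) P : alg1_run x a g (S :\: C) P -> v \in C ->
  Fs (x_of_clustering R (C :: P)) S = Fs (fun _ w => if w \in C then 0 else 1) S.
Proof.
move=> run vC; apply: eq_bigr => w _.
rewrite /cost /x_of_clustering same_cons vC /= (@same_out _ _ v w run) ?orbF //.
by rewrite !inE vC.
Qed.

Lemma Ec_out (S C : {set V}) P : alg1_run x a g (S :\: C) P -> C \subset S -> v \notin C ->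
  Fs (x_of_clustering R (C :: P)) S =
  \sum_(w in C) cost (fun _ _ => 1) w + Fs (x_of_clustering R P) (S :\: C).
Proof.
move=> run CS vC; rewrite (Fs_split _ CS vC); congr (_ + _).
  apply: eq_bigr => w wC; rewrite /cost /x_of_clustering same_cons (negbTE vC) /=.
  by rewrite (same_out run) // !inE wC orbT.
by apply: eq_bigr => w _; rewrite /cost /x_of_clustering same_cons (negbTE vC).
Qed.


Lemma inT c (S : {set V}) u w :
  (w \in Tset x c S u) = [&& w \in S, w != u & x u w <= c].
Proof. by rewrite inE. Qed.

Lemma L3a (S : {set V}) : v \in S ->
  a * #|Tset x a S v|%:R / 2 <= \sum_(w in Tset x a S v) x v w ->
  Fs (fun _ w => if w \in [set v] then 0 else 1) S <= K * Fs x S.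
Proof.
move=> vS avg; set T := Tset x a S v.
have TS : T \subset S :\ v.
  by apply/subsetP => w; rewrite inT !inE => /and3P[-> -> _].
have pw : forall w, w \in S :\ v ->
  cost (fun _ w => if w \in [set v] then 0 else 1) w <=
  2 * Q * cost x w + (if w \in T then 1 - 2 / a * x v w else 0).
  move=> w; rewrite in_setD1 => /andP[wv wS].
  have vw : v != w by rewrite eq_sym.
  have h0 := x0 vw; have h1 := x1 vw.
  have hq := aQ; have hQ := Q0; have ha := aa; have hai := ainv0.
  rewrite /cost inE (negbTE wv).
  case wT: (w \in T).
    have xa : x v w <= a by move: wT; rewrite inT => /and3P[].
    have k1 : a^-1 * x v w <= 1.
      by rewrite -ha; apply: ler_wpM2l => //; exact: ltW.
    case: (plus v w).
      have : 0 <= (Q - a^-1) * x v w by apply: mulr_ge0 => //; rewrite subr_ge0.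
      snra.
    have : 0 <= (Q - a^-1) * (1 - x v w) by apply: mulr_ge0; rewrite subr_ge0.
    have : 0 <= a^-1 * (1 - 2 * x v w) by apply: mulr_ge0; [exact: ltW|snra].
    snra.
  have xa : a < x v w.
    by move: wT; rewrite inT wS wv /= => /negbT; rewrite ltNge.
  case: (plus v w).
    have := @oneQ a (x v w) a0 (or_introl erefl) (ltW xa); snra.
  have : 0 <= Q * (1 - x v w) by apply: mulr_ge0 => //; rewrite subr_ge0.
  snra.
apply: le_trans (ler_sum _ pw) _.
rewrite big_split /= -mulr_sumr (sum_ind _ TS) sumrB sumr_const -mulr_sumr.
have := QK (F_ge0 S); rewrite /Fs.
set F := \sum_(i in S :\ v) cost x i.
set n := #|T|%:R; set s := \sum_(i in T) x v i.
have hn : 2 / a * (a * n / 2) = n by field; rewrite gt_eqF // a0.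
have : 2 / a * (a * n / 2) <= 2 / a * s.
  by apply: ler_wpM2l => //; rewrite mulr_ge0 // ltW // ainv0.
snra.
Qed.

Lemma K0 : 0 <= K.
Proof. rewrite /K /Kc -/Q; have := Q0; snra. Qed.

Lemma L3b (S : {set V}) : v \in S ->
  Fs (fun _ w => if w \in v |: Tset x a S v then 0 else 1) S <= K * Fs x S.
Proof.
move=> vS; set T := Tset x a S v.
have hQ := Q0.
have pw : forall w, w \in S :\ v ->
  cost (fun _ w => if w \in v |: T then 0 else 1) w <= Q * cost x w.
  move=> w; rewrite in_setD1 => /andP[wv wS].
  have vw : v != w by rewrite eq_sym.
  have h0 := x0 vw; have h1 := x1 vw.
  rewrite /cost in_setU1 (negbTE wv) /=.
  case wT: (w \in T).
    have xa : x v w <= a by move: wT; rewrite inT => /and3P[].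
    case: (plus v w); first by rewrite mulr_ge0.
    rewrite subr0; apply: (@oneQ (1 - 2*a)); [slra | by do 2 right; left | slra].
  have xa : a < x v w.
    by move: wT; rewrite inT wS wv /= => /negbT; rewrite ltNge.
  case: (plus v w).
    by apply: (@oneQ a); [exact: a0 | left | exact: ltW].
  by rewrite subrr mulr_ge0 // subr_ge0.
apply: le_trans (ler_sum _ pw) _; rewrite -mulr_sumr; exact: QK1 (F_ge0 S).
Qed.

Lemma L3c (S : {set V}) u : u \in S -> v \in Tset x a S u ->
  (forall u', u' \in S -> (#|Tset x g S u'| <= #|Tset x g S u|)%N) ->
  Fs (fun _ w => if w \in u |: Tset x a S u then 0 else 1) S <= K * Fs x S.
Proof.
move=> uS vT umax; move: (vT); rewrite inT => /and3P[vS vu xuv].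
have uv : u != v by rewrite eq_sym.
have xvu : x v u = x u v := xsym vu.
set T := Tset x a S u.
have hQ := Q0.
have pw : forall w, w \in S :\ v ->
  cost (fun _ w => if w \in u |: T then 0 else 1) w <=
  Q * cost x w + (if (b < x u v) && (w \in Tset x g S v) then 1 else 0).
  move=> w; rewrite in_setD1 => /andP[wv wS].
  have vw : v != w by rewrite eq_sym.
  have h0 := x0 vw; have h1 := x1 vw.
  have hi : 0 <= (if (b < x u v) && (w \in Tset x g S v) then 1 else 0 : R).
    by case: ifP.
  set i := (if (b < x u v) && (w \in Tset x g S v) then 1 else 0 : R) in hi *.
  rewrite /cost in_setU1.
  case: (eqVneq w u) => [wu|wu] /=.
    rewrite wu xvu.
    have hu0 := x0 uv.
    case: (plus v u).
      have : 0 <= Q * x u v by rewrite mulr_ge0.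
      slra.
    have : 1 <= Q * (1 - x u v).
      apply: (@oneQ (1 - 2*a)); [slra | by do 2 right; left | slra].
    slra.
  have uw : u != w by rewrite eq_sym.
  case wT: (w \in T).
    have xa : x u w <= a by move: wT; rewrite inT => /and3P[].
    have tr := xtri vu uw vw.
    case: (plus v w).
      have : 0 <= Q * x v w by rewrite mulr_ge0.
      slra.
    have : 1 <= Q * (1 - x v w).
      apply: (@oneQ (1 - 2*a)); [slra | by do 2 right; left | slra].
    slra.
  have xa : a < x u w.
    by move: wT; rewrite inT wS wu /= => /negbT; rewrite ltNge.
  have tr := xtri uv vw uw.
  case: (plus v w); last first.
    have : 0 <= Q * (1 - x v w) by rewrite mulr_ge0 // subr_ge0.
    slra.
  have [hb|hb] := leP (x u v) b.
    have : 1 <= Q * x v w.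
      apply: (@oneQ (a - b)); [rewrite /b; slra | by do 3 right; left | slra].
    slra.
  have [hg|hg] := leP (x v w) g.
    have -> : i = 1 by rewrite /i hb inT wS wv hg.
    have : 0 <= Q * x v w by rewrite mulr_ge0.
    slra.
  have : 1 <= Q * x v w.
    by apply: (@oneQ g); [exact: g0 | right; left | exact: ltW].
  slra.
apply: le_trans (ler_sum _ pw) _.
rewrite big_split /= -mulr_sumr.
have hF := F_ge0 S.
have [hb|hb] := leP (x u v) b.
  rewrite [X in _ + X]big1 ?addr0; first exact: QK1 hF.
  by move=> w _.
have Tsv : Tset x g S v \subset S :\ v.
  by apply/subsetP => w; rewrite inT !inE => /and3P[-> -> _].
rewrite /=.
rewrite (sum_ind _ Tsv) sumr_const.
have c1 : (#|Tset x g S v| <= #|Tset x g S u|)%N := umax v vS.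
have c2 : #|Tset x g S u|%:R <= Q * Fs x S.
  have e : \sum_(w in Tset x g S u) (1:R) = #|Tset x g S u|%:R by rewrite sumr_const.
  rewrite -e /Fs mulr_sumr.
  have Tsu : Tset x g S u \subset S :\ v.
    apply/subsetP => w; rewrite inT !inE => /and3P[wS wu xuw]; rewrite wS andbT.
    apply/eqP => wv; move: xuw hb; rewrite wv /b; slra.
  have hs : \sum_(w in Tset x g S u) Q * cost x w <= \sum_(w in S :\ v) Q * cost x w.
    apply: sum_sub => // w; rewrite in_setD1 => /andP[wv _]; rewrite mulr_ge0 //; exact: cost_ge0.
  apply: le_trans hs.
  apply: ler_sum => w; rewrite inT => /and3P[wS wu xuw].
  have wv : w != v by apply/eqP => wv; move: xuw hb; rewrite wv /b; slra.
  have vw : v != w by rewrite eq_sym.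
  have uw : u != w by rewrite eq_sym.
  rewrite /cost; case: (plus v w).
    have tr := xtri uw wv uv; rewrite (xsym wv) in tr.
    apply: (@oneQ (b - g)); [rewrite /b; slra | by do 4 right; left | rewrite /b in hb *; slra].
  have tr := xtri vu uw vw.
  apply: (@oneQ (1 - 2*a)); [slra | by do 2 right; left | slra].
have := QK hF.
move: c1; rewrite -(ler_nat R) => c1.
rewrite /Fs in c2 hF *.
slra.
Qed.

Lemma L1 (S : {set V}) u : u \in S -> v \in S -> v \notin u |: Tset x a S u ->
  \sum_(w in Tset x a S u) x u w < a * #|Tset x a S u|%:R / 2 ->
  \sum_(w in u |: Tset x a S u) cost (fun _ _ => 1) w <=
  K * \sum_(w in u |: Tset x a S u) cost x w.
Proof.
move=> uS vS; rewrite in_setU1 negb_or => /andP[vu vT] avg.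
have uv : u != v by rewrite eq_sym.
have xvu : x v u = x u v := xsym vu.
have xuv : a < x u v by move: vT; rewrite inT vS vu /= ltNge.
set T := Tset x a S u.
have uT : u \notin T by rewrite inT eqxx andbF.
have hQ := Q0; have hK := K0.
have Cv : forall w, w \in u |: T -> w != v.
  move=> w; rewrite in_setU1 => /orP[/eqP->//|wT].
  by apply/eqP => wv; move: vT; rewrite -wv wT.
have sumC0 : 0 <= \sum_(w in u |: T) cost x w.
  by apply: sumr_ge0 => w /Cv; exact: cost_ge0.
have hu0 := x0 uv; have hu1 := x1 uv.
have [hh|hh] := leP (1/2) (x u v).
  have pw : forall w, w \in u |: T -> cost (fun _ _ => 1) w <= Q * cost x w.
    move=> w wC; have wv := Cv w wC; move: wC.
    rewrite in_setU1; case: (eqVneq w u) => [->|wu] /= => [_|wT].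
      rewrite /cost xvu; case: (plus v u).
        by apply: (@oneQ a); [exact: a0 | left | exact: ltW].
      by rewrite subrr mulr_ge0 // subr_ge0.
    have xa : x u w <= a by move: wT; rewrite inT => /and3P[].
    have uw : u != w by rewrite eq_sym.
    have tr := xtri uw wv uv; rewrite (xsym wv) in tr.
    have vw : v != w by rewrite eq_sym.
    rewrite /cost; case: (plus v w).
      apply: (@oneQ (1/2 - a)); [slra | by do 5 right; left | slra].
    by rewrite subrr mulr_ge0 // subr_ge0 x1.
  apply: le_trans (ler_sum _ pw) _; rewrite -mulr_sumr; exact: QK1 sumC0.
have pw : forall w, w \in u |: T -> cost (fun _ _ => 1) w <=
    K * cost x w + (if w \in T then 2 / a * (x u w - a / 2) else 0).
  move=> w wC; have wv := Cv w wC; move: wC.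
  have vw : v != w by rewrite eq_sym.
  rewrite in_setU1; case: (eqVneq w u) => [->|wu] /= => [_|wT].
    rewrite (negbTE uT) /cost xvu; case: (plus v u).
      have : 1 <= Q * x u v by apply: (@oneQ a); [exact: a0 | left | exact: ltW].
      have := QK1 hu0; slra.
    have : 0 <= K * (1 - x u v) by rewrite mulr_ge0 // subr_ge0.
    slra.
  rewrite wT.
  have xa : x u w <= a by move: wT; rewrite inT => /and3P[].
  have uw : u != w by rewrite eq_sym.
  have hw0 := x0 uw.
  have tr := xtri uw wv uv; rewrite (xsym wv) in tr.
  have tr2 := xtri vu uw vw.
  have hw1 := x1 vw.
  have hc : (1/2 - a) * (a - x u w) <= cost x w.
    rewrite /cost; case: (plus v w).
      have : 0 <= (1/2 + a) * (a - x u w) by apply: mulr_ge0; slra.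
      snra.
    have : 0 <= (1/2 - a) * (1 - a + x u w) by apply: mulr_ge0; slra.
    snra.
  have hs : a - x u w <= Q * cost x w.
    apply: (@divQ (1/2 - a)) => //; [slra | by do 5 right; left | exact: cost_ge0].
  have hq : a^-1 * (a - x u w) <= Q * (Q * cost x w).
    apply: le_trans (_ : Q * (a - x u w) <= _).
      by apply: ler_wpM2r; [slra | exact: aQ].
    exact: ler_wpM2l.
  have := QQK (cost_ge0 wv).
  have ha := aa.
  have e1 : cost (fun _ _ => (1:R)) w <= 1.
    by rewrite /cost; case: (plus v w) => //; rewrite subrr ler01.
  move: e1 hq; set c1 := cost _ w; set cw := cost x w => e1 hq.
  snra.
apply: le_trans (ler_sum _ pw) _.
rewrite big_split /= -mulr_sumr (sum_ind _ (subsetUr _ _)).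
rewrite -mulr_sumr sumrB sumr_const -mulr_natr.
have : \sum_(i in T) x u i - a / 2 * #|T|%:R <= 0 by slra.
move/(mulr_ge0_le0 (_ : 0 <= 2 / a)) => h.
have := h (ltac:(rewrite mulr_ge0 // ltW // ainv0)).
slra.
Qed.

Definition near (S : {set V}) : {set V} := [set w in S :\ v | x v w <= eps].

Lemma near_mem S w : (w \in near S) = [&& w != v, w \in S & x v w <= eps].
Proof. by rewrite !inE -andbA. Qed.

Lemma near_sub (S S' : {set V}) : S' \subset S -> (#|near S'| <= #|near S|)%N.
Proof.
move=> h; apply: subset_leq_card; apply/subsetP => w.
by rewrite !near_mem => /and3P[-> wS' ->]; rewrite (subsetP h _ wS').
Qed.

Lemma near_D1 (S : {set V}) u : u \in near S -> #|near S| = (#|near (S :\ u)|).+1.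
Proof.
move=> uN; rewrite (cardsD1 u (near S)) uN add1n.
have -> // : near (S :\ u) = near S :\ u.
by apply/setP => w; rewrite !inE; case: (w == u); case: (w == v).
Qed.

Lemma near_T (S : {set V}) u : u \in S -> v \in S -> v != u -> x v u <= eps ->
  (#|near S| <= #|Tset x a S u|)%N.
Proof.
move=> uS vS vu hvu.
have uv : u != v by rewrite eq_sym.
have vT : v \in Tset x a S u.
  by rewrite inT vS vu /= (xsym uv); move: hvu; rewrite /eps; slra.
have sub : near S \subset u |: (Tset x a S u :\ v).
  apply/subsetP => w; rewrite near_mem in_setU1 => /and3P[wv wS xw].
  case: (eqVneq w u) => //= wu.
  have vw : v != w by rewrite eq_sym.
  have uw : u != w by rewrite eq_sym.
  have tr := xtri uv vw uw.
  rewrite in_setD1 wv inT wS wu /=; rewrite (xsym uv) in tr.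
  move: hvu xw; rewrite /eps; slra.
apply: leq_trans (subset_leq_card sub) _.
rewrite cardsU1 (cardsD1 v (Tset x a S u)) vT add1n.
by rewrite -add1n leq_add2r leq_b1.
Qed.

Lemma F_T (S : {set V}) u : u \in S -> v \in S -> v != u -> x v u <= eps ->
  a * #|Tset x a S u|%:R / 2 <= \sum_(w in Tset x a S u) x u w ->
  a / 4 * #|Tset x a S u|%:R <= Fs x S.
Proof.
move=> uS vS vu hvu avg.
have uv : u != v by rewrite eq_sym.
have xuv : x u v = x v u := xsym uv.
have vT : v \in Tset x a S u.
  by rewrite inT vS vu /= xuv; move: hvu; rewrite /eps; slra.
set T := Tset x a S u.
have h1 : \sum_(w in T :\ v) cost x w <= Fs x S.
  apply: sum_sub.
    by apply/subsetP => w; rewrite !in_setD1 inT => /andP[-> /and3P[-> _ _]].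
  by move=> w; rewrite in_setD1 => /andP[wv _]; exact: cost_ge0.
have h2 : \sum_(w in T :\ v) (x u w - eps) <= \sum_(w in T :\ v) cost x w.
  apply: ler_sum => w; rewrite in_setD1 inT => /andP[wv /and3P[wS wu xuw]].
  have vw : v != w by rewrite eq_sym.
  have uw : u != w by rewrite eq_sym.
  have tr := xtri uv vw uw; have tr2 := xtri vu uw vw.
  rewrite /cost; case: (plus v w); move: hvu; rewrite /eps; slra.
have h3 : \sum_(w in T) (x u w - eps) = (x u v - eps) + \sum_(w in T :\ v) (x u w - eps).
  by rewrite (big_setD1 v vT).
move: h3; rewrite sumrB sumr_const -mulr_natr => h3.
move: h1 h2 h3 avg hvu; rewrite xuv /eps.
set n := #|T|%:R; set s := \sum_(i in T) x u i.
set s1 := \sum_(i in T :\ v) (x u i - a / 4); set s2 := \sum_(i in T :\ v) cost x i.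
move=> *; slra.
Qed.

Lemma main (S : {set V}) P : alg1_run x a g S P -> v \in S ->
  exists k : R, [/\ Fs (x_of_clustering R P) S <= K * Fs x S + k,
    k <= #|near S|%:R & k <= 4 / a * Fs x S].
Proof.
have hK := K0.
have hai := ainv0.
elim => {S P} [|S u P uS umax avg run IH|S u P uS umax avg run IH] vS.
- by rewrite inE in vS.
- have hF := F_ge0 S.
  have h4 : 0 <= 4 / a * Fs x S by rewrite mulr_ge0 // mulr_ge0 // ltW.
  case: (eqVneq v u) => [vu|vu].
    exists 0; split; [|by rewrite ler0n|exact: h4].
    rewrite (Ec_in run) ?inE ?vu // addr0.
    rewrite -vu in avg *; exact: L3a.
  have vS' : v \in S :\ u by rewrite in_setD1 vu.
  have [k [h1 h2 h3]] := IH vS'.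
  have Cs : [set u] \subset S by rewrite sub1set.
  have vC : v \notin [set u] by rewrite inE.
  rewrite (Ec_out run Cs vC) big_set1.
  have eF := Fs_split x Cs vC; rewrite big_set1 in eF.
  have hF' := F_ge0 (S :\: [set u]).
  have uv : u != v by rewrite eq_sym.
  have cu0 := cost_ge0 uv.
  have c1 : cost (fun _ _ => (1:R)) u <= 1.
    by rewrite /cost; case: (plus v u) => //; rewrite subrr ler01.
  have nS : (#|near (S :\: [set u])| <= #|near S|)%N by apply: near_sub; exact: subsetDl.
  move: nS; rewrite -(ler_nat R) => nS.
  have [hn|hn] := leP (x v u) eps.
    exists (k + 1).
    have uN : u \in near S by rewrite near_mem uv uS hn.
    have eN := near_D1 uN.
    have nT := near_T uS vS vu hn; move: nT; rewrite -(ler_nat R) => nT.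
    have fT := F_T uS vS vu hn avg.
    have : #|Tset x a S u|%:R <= 4 / a * Fs x S.
      have e : #|Tset x a S u|%:R = 4 / a * (a / 4 * #|Tset x a S u|%:R).
        by field; rewrite gt_eqF // a0.
      rewrite [X in X <= _]e; apply: ler_wpM2l => //; rewrite mulr_ge0 // ltW // ainv0.
    rewrite eN -addn1 natrD in nT *.
    have eK : K * Fs x S = K * cost x u + K * Fs x (S :\: [set u]) by rewrite eF mulrDr.
    have e4 : 4 / a * Fs x S = 4 / a * cost x u + 4 / a * Fs x (S :\: [set u]).
      by rewrite eF mulrDr.
    have : 0 <= K * cost x u by rewrite mulr_ge0.
    have : 0 <= 4 / a * cost x u by rewrite !mulr_ge0 // ltW.
    move=> *; split; slra.
  exists k.
  have : cost (fun _ _ => (1:R)) u <= K * cost x u.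
    rewrite /cost (xsym vu); case: (plus v u); last by rewrite subrr mulr_ge0 // subr_ge0 x1.
    apply: le_trans (QK1 (x0 uv)).
    by apply: (@oneQ eps); [rewrite /eps; slra | by do 6 right | move: hn; rewrite (xsym vu); exact: ltW].
  have eK : K * Fs x S = K * cost x u + K * Fs x (S :\: [set u]) by rewrite eF mulrDr.
  have e4 : 4 / a * Fs x S = 4 / a * cost x u + 4 / a * Fs x (S :\: [set u]).
    by rewrite eF mulrDr.
  have : 0 <= 4 / a * cost x u by rewrite !mulr_ge0 // ltW.
  move=> *; split; slra.
- have hF := F_ge0 S.
  have h4 : 0 <= 4 / a * Fs x S by rewrite mulr_ge0 // mulr_ge0 // ltW.
  set T := Tset x a S u in avg run IH *.
  case: (eqVneq v u) => [vu|vu].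
    exists 0; split; [|by rewrite ler0n|exact: h4].
    rewrite (Ec_in run) ?in_setU1 ?vu ?eqxx // addr0.
    rewrite /T -vu; exact: L3b.
  case vT: (v \in T).
    exists 0; split; [|by rewrite ler0n|exact: h4].
    rewrite (Ec_in run) ?in_setU1 ?vT ?orbT // addr0.
    exact: L3c.
  have vC : v \notin u |: T by rewrite in_setU1 (negbTE vu) vT.
  have Cs : u |: T \subset S.
    by rewrite subUset sub1set uS /=; apply/subsetP => w; rewrite inT => /and3P[].
  have vS' : v \in S :\: (u |: T) by rewrite inE vC.
  have [k [h1 h2 h3]] := IH vS'.
  exists k.
  rewrite (Ec_out run Cs vC).
  have eF := Fs_split x Cs vC.
  have hl := L1 uS vS vC avg.
  have s0 : 0 <= \sum_(w in u |: T) cost x w.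
    apply: sumr_ge0 => w wC; apply: cost_ge0; apply/eqP => wv; move: vC; by rewrite -wv wC.
  have nS : (#|near (S :\: (u |: T))| <= #|near S|)%N by apply: near_sub; exact: subsetDl.
  move: nS; rewrite -(ler_nat R) => nS.
  have : 4 / a * \sum_(w in u |: T) cost x w >= 0 by rewrite mulr_ge0 // mulr_ge0 // ltW.
  have eK : K * Fs x S = K * \sum_(w in u |: T) cost x w + K * Fs x (S :\: (u |: T)).
    by rewrite eF mulrDr.
  have e4 : 4 / a * Fs x S =
    4 / a * \sum_(w in u |: T) cost x w + 4 / a * Fs x (S :\: (u |: T)).
    by rewrite eF mulrDr.
  move=> *; split; slra.
Qed.

End Proof.

Theorem theorem1 (R : realType) (alpha gamma : R) :
  0 < gamma -> gamma < alpha -> alpha < 1 / 2 ->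
  exists c : R,
    forall (V : finType) (plus : rel V) (x : V -> V -> R) (P : seq {set V}),
      labeled_complete plus ->
      frac_clustering x ->
      alg1_run x alpha gamma [set: V] P ->
      forall v : V, err_clust R plus P v <= c * err_frac plus x v.
Proof.
move=> g0 ga a2.
exists (Kc alpha gamma + 4 / alpha).
move=> V plus x P _ hx run v.
have [k [h1 h2 h3]] := main (v:=v) g0 ga a2 plus hx run (in_setT v).
rewrite /err_clust !err_frac_eq mulrDl.
lra.
Qed.
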